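(* Let $G=(V,E,X)$ be a spatial graph with $E\neq\emptyset$, let $(R,A,k)\in\mathrm{Sim}(p)$ and $G'=\psi(G,(R,A,k))=(V,E,kRX+A)$. Assume $0<\sup_{\theta\ge0} d_B(PD(G),PD(f_\theta(G)))<\infty$ and that this supremum is attained. Then for every $\theta\ge0$, $S_{k\theta}(G')=S_\theta(G)$; consequently $\arg\min_{\beta\ge0}S_\beta(G')=k\cdot\arg\min_{\theta\ge0}S_\theta(G)$. In particular, if $\theta^*$ minimizes $\theta\mapsto S_\theta(G)$, then $\beta^*=k\theta^*$ minimizes $\beta\mapsto S_\beta(G')$, and the topological spatial graph coarsening $F(G)=f_{\theta^*}(G)$ is equivariant: $$F(\psi(G,(R,A,k)))=f_{k\theta^*}(G')=\psi(F(G),(R,A,k)).$$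
   Context: A spatial graph is a triple $G=(V,E,X)$ with finite node set $V$, undirected edge set $E\subseteq V\times V$, positions $x_u\in\mathbb{R}^p$, and edge lengths $\ell_{u,v}=\|x_u-x_v\|$. For $\theta\ge0$, $sub(G,\theta)=(V,\{(u,v)\in E:\ell_{u,v}\le\theta\})$. Coarsening: $f_\theta(G)=(f^V_\theta(G),f^E_\theta(G),f^X_\theta(G))$, where $f^V_\theta(G)=\{V_1,\dots,V_K\}$ is the partition of $V$ into vertex sets of connected components of $sub(G,\theta)$ (hypernodes); $f^E_\theta(G)$ contains $(V_i,V_j)$ for distinct hypernodes iff some $u\in V_i$, $v\in V_j$ have $(u,v)\in E$; positions are either average positioning $f^X_\theta(G)_i=\frac1{|V_i|}\sum_{u\in V_i}x_u$ or degree positioning $f^X_\theta(G)_i=x_u$, $u=\arg\max_{v\in V_i}\deg(v)$ (degree in $(V,E)$, ties broken by a fixed rule depending only on $(V,E)$). The coarsened graph is a spatial graph with Euclidean edge lengths between hypernode positions. Similarity action: for $R\in O_p(\mathbb{R})$, $A\in\mathbb{R}^p$, $k>0$, $\psi(G,(R,A,k))$ replaces each position $x$ by $kRx+A$ (for any spatial graph, including coarsened ones). Shortest-path distance $d_G(u,v)$: minimal total length of a path from $u$ to $v$ in $(V,E)$ ($0$ if $u=v$, $+\infty$ if none). Triangle-aware filtration $\widetilde{\mathcal C}(G)$: simplex $\sigma\subseteq V$ enters at scale $t(\sigma)$, with $t(\{u\})=0$, $t(\{u,v\})=d_G(u,v)$, $t(\{u,v,w\})=\min\{d_G(u,v)+d_G(v,w),d_G(u,w)+d_G(v,w),d_G(u,v)+d_G(u,w)\}$,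 and for dimension $\ge3$, $t(\sigma)$ is the max of $t$ over its codimension-one faces. $PD(G)$ is the persistence diagram (multiset of points $(r_b,r_d)$, over a fixed set of homological dimensions) of this filtration. Bottleneck distance: for diagrams $\mu,\nu$ and diagonal $\Delta=\{(a,a):a\in\mathbb{R}\}$, $d_B(\mu,\nu)=\inf_{\pi}\sup_{x}\|x-\pi(x)\|_\infty$, the infimum over bijections $\pi:\mu\cup\Delta\to\nu\cup\Delta$. Score: $S_\theta(G)=\frac{|f^E_\theta(G)|}{|E|}+\lambda(G)\,d_B(PD(G),PD(f_\theta(G)))$ with $\lambda(G)=\big[\max_{\theta\ge0}d_B(PD(G),PD(f_\theta(G)))\big]^{-1}$. The topological spatial graph coarsening is $F(G)=f_{\theta^*}(G)$ with $\theta^*\in\arg\min_{\theta\ge0}S_\theta(G)$. *)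

(* Defs.v *)
From HB Require Import structures.
From mathcomp Require Import all_boot all_order all_algebra.
From mathcomp Require Import all_classical all_reals.
From mathcomp Require Import ereal.

Set Implicit Arguments.
Unset Strict Implicit.
Unset Printing Implicit Defensive.

Import Order.TTheory GRing.Theory Num.Theory.
Local Open Scope ring_scope.

Section SpatialGraphs.
Variables (R : realType) (p : nat).

(* A spatial graph on a finite ambient type T: node set V, undirected edges
   represented as 2-element subsets of V, and positions x_u in R^p
   (column vectors).  Positions outside V are irrelevant. *)
Record sgraph (T : finType) := SGraph {
  sV : {set T};
  sE : {set {set T}};
  sX : T -> 'cV[R]_p
}.

Definition wf_sgraph (T : finType) (G : sgraph T) : Prop :=
  forall e, e \in sE G -> e \subset sV G /\ #|e| = 2%N.

Definition enorm (x : 'cV[R]_p) : R := Num.sqrt (\sum_i (x i 0) ^+ 2).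

Definition elen (T : finType) (G : sgraph T) (u v : T) : R :=
  enorm (sX G u - sX G v).

Definition adj (T : finType) (G : sgraph T) : rel T :=
  fun u v => [set u; v] \in sE G.

Definition deg (T : finType) (G : sgraph T) (u : T) : nat :=
  #|[set e in sE G | u \in e]|.

Definition subadj (T : finType) (G : sgraph T) (theta : R) : rel T :=
  fun u v => adj G u v && (elen G u v <= theta).

Definition hnode (T : finType) (G : sgraph T) (theta : R) (u : T) : {set T} :=
  [set v | connect (subadj G theta) u v].

Definition coarseV (T : finType) (G : sgraph T) (theta : R) : {set {set T}} :=
  [set hnode G theta u | u in sV G].

Definition coarseE (T : finType) (G : sgraph T) (theta : R)
  : {set {set {set T}}} :=
  [set [set Vi; Vj] | Vi in coarseV G theta, Vj in coarseV G theta &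
     (Vi != Vj) && [exists u in Vi, exists v in Vj, adj G u v]].

Inductive posmode := AveragePos | DegreePos.

Definition coarseX (T : finType) (G : sgraph T) (m : posmode) (S : {set T})
  : 'cV[R]_p :=
  match m with
  | AveragePos => (#|S|%:R)^-1 *: \sum_(u in S) sX G u
  | DegreePos =>
      match [pick u in S] with
      | Some u0 => sX G [arg max_(u > u0 in S) deg G u]
      | None => 0
      end
  end.

Definition coarsen (T : finType) (m : posmode) (theta : R) (G : sgraph T)
  : sgraph {set T} :=
  SGraph (coarseV G theta) (coarseE G theta) (coarseX G m).

Definition psi (T : finType) (Rm : 'M[R]_p) (A : 'cV[R]_p) (k : R)
  (G : sgraph T) : sgraph T :=
  SGraph (sV G) (sE G) (fun u => k *: (Rm *m sX G u) + A).

Definition sg_eq (T : finType) (G1 G2 : sgraph T) : Prop :=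
  [/\ sV G1 = sV G2, sE G1 = sE G2 & {in sV G1, sX G1 =1 sX G2}].

Local Open Scope ereal_scope.

Fixpoint walklen (T : finType) (G : sgraph T) (u : T) (s : seq T) : R :=
  match s with
  | [::] => 0%R
  | v :: s' => (elen G u v + walklen G v s')%R
  end.

Definition spdist (T : finType) (G : sgraph T) (u v : T) : \bar R :=
  ereal_inf [set (walklen G u s)%:E | s in
               [set s | path (adj G) u s && (last u s == v)]].

Definition tbase (T : finType) (G : sgraph T) (sigma : {set T}) : \bar R :=
  match enum sigma with
  | [:: u; v] => spdist G u v
  | [:: u; v; w] =>
      mine (spdist G u v + spdist G v w)
        (mine (spdist G u w + spdist G v w) (spdist G u v + spdist G u w))
  | _ => 0
  end.

Fixpoint tfilt_rec (T : finType) (G : sgraph T) (n : nat) (sigma : {set T})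
  : \bar R :=
  match n with
  | 0%N => 0
  | n'.+1 => if (#|sigma| <= 3)%N then tbase G sigma
             else \big[maxe/-oo]_(x in sigma) tfilt_rec G n' (sigma :\ x)
  end.

Definition tfilt (T : finType) (G : sgraph T) (sigma : {set T}) : \bar R :=
  tfilt_rec G #|sigma| sigma.

(* Sublevel complex: simplices sigma (nonempty subsets of V) with
   t(sigma) <= r, or t(sigma) < r when [strict] (left limit r^-). *)
Definition inK (T : finType) (G : sgraph T) (r : \bar R) (strict : bool)
  (sigma : {set T}) : bool :=
  [&& sigma \subset sV G, sigma != finset.set0 &
      if strict then tfilt G sigma < r else tfilt G sigma <= r].

Local Close Scope ereal_scope.

(* Simplicial homology with coefficients in a field F, via matrices indexed
   by all subsets of T. *)
Section Homology.
Variable (F : fieldType).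

Definition nS (T : finType) := #|{: {set T}}|.

Definition sidx (T : finType) (i : 'I_(nS T)) : {set T} := enum_val i.

Definition vpos (T : finType) (x : T) (sigma : {set T}) : nat :=
  #|[set y in sigma | (enum_rank y < enum_rank x)%N]|.

(* boundary: row vector convention, c *m bdry = boundary of c *)
Definition bdry (T : finType) : 'M[F]_(nS T) :=
  \matrix_(i, j)
    (if (1 < #|sidx i|)%N then
       \sum_(x in sidx i)
          (sidx j == sidx i :\ x)%:R * (-1) ^+ vpos x (sidx i)
     else 0).

Definition chains (T : finType) (G : sgraph T) (q : nat) (r : \bar R)
  (strict : bool) : 'M[F]_(nS T) :=
  diag_mx (\row_i ((inK G r strict (sidx i) && (#|sidx i| == q.+1))%:R)).

Definition cycles (T : finType) (G : sgraph T) q r strict : 'M[F]_(nS T) :=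
  (chains G q r strict :&: kermx (bdry T))%MS.

Definition bounds (T : finType) (G : sgraph T) q r strict : 'M[F]_(nS T) :=
  (chains G q.+1 r strict *m bdry T)%MS.

(* rank of H_q(K_r) -> H_q(K_s) *)
Definition prank (T : finType) (G : sgraph T) (q : nat)
  (r : \bar R) (sr : bool) (s : \bar R) (ss : bool) : int :=
  (\rank (cycles G q r sr))%:Z
  - (\rank (cycles G q r sr :&: bounds G q s ss)%MS)%:Z.

(* multiplicity of the point (b,d), b < d, in the q-th diagram *)
Definition pmult (T : finType) (G : sgraph T) (q : nat) (b : R) (d : \bar R)
  : int :=
  if d is +oo%E then
    prank G q b%:E false +oo%E true - prank G q b%:E true +oo%E true
  else
    prank G q b%:E false d true - prank G q b%:E true d true
    - prank G q b%:E false d false + prank G q b%:E true d false.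

Definition is_diagram (T : finType) (G : sgraph T) (q : nat)
  (s : seq (R * \bar R)) : Prop :=
  forall b d, (count_mem (b, d) s)%:Z =
              (if (b%:E < d)%E then pmult G q b d else 0).

Definition PDq (T : finType) (G : sgraph T) (q : nat) : seq (R * \bar R) :=
  xget [::] [set s | is_diagram G q s].

End Homology.

Local Open Scope ereal_scope.

(* Bottleneck distance: bijections between (points of s1) + diagonal and
   (points of s2) + diagonal; the diagonal point (a,a) is indexed by a. *)
Definition linf (x y : R * \bar R) : \bar R :=
  maxe (`|x.1 - y.1|%R)%:E (if x.2 == y.2 then 0 else `|x.2 - y.2|).

Definition dpt (s : seq (R * \bar R)) (x : 'I_(size s) + R) : R * \bar R :=
  match x with
  | inl i => nth (0%R, 0) s i
  | inr a => (a, a%:E)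
  end.

Definition bottleneck (s1 s2 : seq (R * \bar R)) : \bar R :=
  ereal_inf [set ereal_sup [set linf (dpt x) (dpt (pi x)) | x in [set: _]]
            | pi in [set pi : 'I_(size s1) + R -> 'I_(size s2) + R
                     | bijective pi]].

Definition dB (F : fieldType) (dims : seq nat) (T1 T2 : finType)
  (G1 : sgraph T1) (G2 : sgraph T2) : \bar R :=
  \big[maxe/0]_(q <- dims) bottleneck (PDq F G1 q) (PDq F G2 q).

Definition dBsup (F : fieldType) (dims : seq nat) (m : posmode)
  (T : finType) (G : sgraph T) : \bar R :=
  ereal_sup [set dB F dims G (coarsen m theta G) | theta in [set theta | (0 <= theta)%R]].

Definition score (F : fieldType) (dims : seq nat) (m : posmode)
  (T : finType) (G : sgraph T) (theta : R) : \bar R :=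
  (#|coarseE G theta|%:R / #|sE G|%:R)%:E
  + ((fine (dBsup F dims m G))^-1)%:E * dB F dims G (coarsen m theta G).

Definition argmin_score (F : fieldType) (dims : seq nat) (m : posmode)
  (T : finType) (G : sgraph T) : set R :=
  [set theta | (0 <= theta)%R /\
     forall theta', (0 <= theta')%R -> score F dims m G theta <= score F dims m G theta'].

End SpatialGraphs.

(* Main.v *)
Require Import Defs.
From HB Require Import structures.
From mathcomp Require Import all_boot all_order all_algebra.
From mathcomp Require Import all_classical all_reals.
From mathcomp Require Import ereal.
Import Order.TTheory GRing.Theory Num.Theory.
Local Open Scope ring_scope.
Local Open Scope classical_set_scope.

Set Implicit Arguments.
Unset Strict Implicit.
Unset Printing Implicit Defensive.



Section Geo.
Variables (R : realType) (p : nat).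

Lemma enormZ (k : R) (x : 'cV[R]_p) : 0 <= k -> enorm (k *: x) = k * enorm x.
Proof.
move=> k0; rewrite /enorm.
under eq_bigr do rewrite mxE exprMn.
by rewrite -mulr_sumr sqrtrM ?sqr_ge0 // sqrtr_sqr ger0_norm.
Qed.

Lemma enormE (x : 'cV[R]_p) : enorm x = Num.sqrt ((x^T *m x) 0 0).
Proof.
rewrite /enorm mxE; congr Num.sqrt; apply: eq_bigr => i _.
by rewrite mxE expr2.
Qed.

Lemma enormO (Rm : 'M[R]_p) x : Rm^T *m Rm = 1%:M -> enorm (Rm *m x) = enorm x.
Proof.
move=> hR; rewrite !enormE trmx_mul -mulmxA (mulmxA Rm^T) hR mul1mx //.
Qed.

End Geo.


Section EScale.
Variables (R : realType) (k : R).
Hypothesis k0 : 0 < k.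
Local Open Scope ereal_scope.

Lemma kfin : k%:E \is a fin_num. Proof. by []. Qed.

Lemma mulkD (x y : \bar R) : k%:E * (x + y) = k%:E * x + k%:E * y.
Proof.
case: x => [x| |]; case: y => [y| |] //=;
  rewrite ?gt0_muley ?gt0_muleNy ?lte_fin //=.
by rewrite -EFinD -EFinM mulrDr.
Qed.

Lemma mulkN (x : \bar R) : k%:E * (- x) = - (k%:E * x).
Proof. by rewrite muleN. Qed.

Lemma abskB (x y : \bar R) : `|k%:E * x - k%:E * y| = k%:E * `|x - y|.
Proof.
case: x => [x| |]; case: y => [y| |] //=;
  rewrite ?gt0_muley ?gt0_muleNy ?lte_fin //=.
by rewrite -mulrBr normrM gtr0_norm.
Qed.

Lemma mulkI : injective (fun x : \bar R => k%:E * x).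
Proof.
move=> x y /= h; have := congr1 (fun z => k^-1%:E * z) h.
by rewrite !muleA -!EFinM mulVf ?gt_eqF // !mul1e.
Qed.

Lemma mulkK (x : \bar R) : k%:E * (k^-1%:E * x) = x.
Proof. by rewrite muleA -EFinM mulfV ?gt_eqF // mul1e. Qed.

End EScale.

Section Invariance.
Variables (R : realType) (p : nat) (U : finType) (k : R).
Hypothesis k0 : 0 < k.
Variables (H H' : sgraph R p U).
Hypothesis hV : sV H' = sV H.
Hypothesis hE : sE H' = sE H.
Hypothesis hl : forall u v, adj H u v -> elen H' u v = k * elen H u v.

Lemma adjE : adj H' = adj H.
Proof. by rewrite /adj hE. Qed.

Lemma walklenS u s : path (adj H) u s -> walklen H' u s = k * walklen H u s.
Proof.
elim: s u => [|v s IH] u /=; first by rewrite mulr0.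
by move=> /andP[a pa]; rewrite hl // IH // mulrDr.
Qed.

Local Open Scope ereal_scope.

Lemma spdistS u v : spdist H' u v = k%:E * spdist H u v.
Proof.
rewrite /spdist -ereal_inf_pZl //; congr ereal_inf; rewrite adjE.
apply/seteqP; split => x /=.
  move=> [s Ps <-]; exists (walklen H u s)%:E; first by exists s.
  by rewrite walklenS // (andP Ps).1.
move=> [y [s Ps <-] <-]; exists s => //.
by rewrite walklenS // (andP Ps).1.
Qed.

Lemma tbaseS sigma : tbase H' sigma = k%:E * tbase H sigma.
Proof.
rewrite /tbase; case: (enum sigma) => [|u [|v [|w [|? ?]]]]; rewrite ?mule0 //.
  exact: spdistS.
by rewrite !spdistS !mine_pMr ?lee_fin ?ltW // !mulkD.
Qed.

Lemma tfilt_recS n sigma : tfilt_rec H' n sigma = k%:E * tfilt_rec H n sigma.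
Proof.
elim: n sigma => [|n IH] sigma /=; first by rewrite mule0.
case: ifP => _; first exact: tbaseS.
rewrite (big_morph (fun x => k%:E * x) (id1 := -oo) (op1 := maxe)).
- by apply: eq_bigr => x _; rewrite IH.
- by move=> x y; rewrite maxe_pMr // lee_fin ltW.
- by rewrite gt0_muleNy // lte_fin.
Qed.

Lemma tfiltS sigma : tfilt H' sigma = k%:E * tfilt H sigma.
Proof. exact: tfilt_recS. Qed.

Lemma inKS r st sigma : inK H' (k%:E * r) st sigma = inK H r st sigma.
Proof.
rewrite /inK hV tfiltS; case: st.
  by rewrite lte_pmul2l // lte_fin.
by rewrite lee_pmul2l // lte_fin.
Qed.

Variable F : fieldType.

Lemma chainsS q r st : chains F H' q (k%:E * r) st = chains F H q r st.
Proof.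
by rewrite /chains; congr diag_mx; apply/rowP => i; rewrite !mxE inKS.
Qed.

Lemma prankS q r sr s ss :
  prank F H' q (k%:E * r) sr (k%:E * s) ss = prank F H q r sr s ss.
Proof. by rewrite /prank /cycles /bounds !chainsS. Qed.

Lemma pmultS q b d : pmult F H' q (k * b) (k%:E * d) = pmult F H q b d.
Proof.
case: d => [d| |].
- by rewrite -EFinM /pmult !EFinM !prankS.
- rewrite gt0_muley ?lte_fin // /pmult.
  have hy r sr ss : prank F H' q (k%:E * r) sr +oo ss = prank F H q r sr +oo ss.
    by have := prankS q r sr +oo ss; rewrite gt0_muley // lte_fin.
  by rewrite !EFinM !hy.
- rewrite gt0_muleNy ?lte_fin // /pmult.
  have hy r sr ss : prank F H' q (k%:E * r) sr -oo ss = prank F H q r sr -oo ss.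
    by have := prankS q r sr -oo ss; rewrite gt0_muleNy // lte_fin.
  by rewrite !EFinM !hy.
Qed.

Definition sc (x : R * \bar R) : R * \bar R := ((k * x.1)%R, k%:E * x.2).
Definition scinv (x : R * \bar R) : R * \bar R := ((k^-1 * x.1)%R, k^-1%:E * x.2).

Lemma scI : injective sc.
Proof.
move=> [a b] [c d] [/mulfI h1 /(mulkI k0) h2].
by rewrite h1 ?gt_eqF // h2.
Qed.

Lemma sc_scinv x : sc (scinv x) = x.
Proof.
case: x => a b; rewrite /sc /scinv /= mulkK // mulrA mulfV ?gt_eqF // mul1r //.
Qed.

Lemma count_sc s x : count_mem (sc x) (map sc s) = count_mem x s.
Proof. by rewrite count_map; apply: eq_count => y /=; rewrite (inj_eq scI). Qed.

Lemma is_diagramS q s : is_diagram F H' q (map sc s) <-> is_diagram F H q s.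
Proof.
have key : (forall b0 d0, (count_mem ((k * b0)%R, k%:E * d0) (map sc s))%:Z =
   (if ((k * b0)%R%:E < k%:E * d0) then pmult F H' q (k * b0)%R (k%:E * d0) else 0%R))
   <-> is_diagram F H q s.
  split => D b d.
    have := D b d; rewrite (_ : ((k * b)%R, k%:E * d) = sc (b, d)) // count_sc.
    by rewrite pmultS EFinM lte_pmul2l // lte_fin.
  rewrite (_ : ((k * b)%R, k%:E * d) = sc (b, d)) // count_sc.
  by rewrite pmultS EFinM lte_pmul2l ?lte_fin // D.
rewrite -key; split => D.
  by move=> b0 d0; apply: D.
move=> b d; have := D (k^-1 * b)%R (k^-1%:E * d).
by rewrite mulkK // mulrA mulfV ?gt_eqF // mul1r.
Qed.

Lemma diag_unique (V : finType) (G : sgraph R p V) q s1 s2 :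
  is_diagram F G q s1 -> is_diagram F G q s2 -> perm_eq s1 s2.
Proof.
move=> D1 D2; apply/allP => -[b d] _; apply/eqP.
by have := D1 b d; rewrite -D2 => -[].
Qed.

Lemma PDqS q : perm_eq (PDq F H' q) (map sc (PDq F H q)).
Proof.
rewrite /PDq; case: (xgetP [::] [set s | is_diagram F H q s]) => [s _ Ds | ND].
  apply: (@diag_unique _ H' q); last by apply/is_diagramS.
  by apply: (@xgetPex _ [::] [set s | is_diagram F H' q s]); exists (map sc s); apply/is_diagramS.
rewrite xgetPN //= => t Dt; apply: (ND (map scinv t)) => /=.
apply/is_diagramS; rewrite -map_comp (eq_map (g := id)) ?map_id //.
by move=> x /=; rewrite sc_scinv.
Qed.

End Invariance.


Section Bottle.
Variables (R : realType) (k : R).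
Hypothesis k0 : 0 < k.
Local Open Scope ereal_scope.

Lemma linfS x y : linf (sc k x) (sc k y) = k%:E * linf x y.
Proof.
rewrite /linf /sc /= maxe_pMr ?lee_fin ?ltW //.
rewrite -EFinM -mulrBr normrM gtr0_norm //.
rewrite (inj_eq (mulkI k0)); case: eqP => _; first by rewrite mule0.
by rewrite abskB.
Qed.

Lemma bottleneck_transport (s1 s2 t1 t2 : seq (R * \bar R))
  (g1 : 'I_(size s1) + R -> 'I_(size t1) + R)
  (g2 : 'I_(size s2) + R -> 'I_(size t2) + R) :
  bijective g1 -> bijective g2 ->
  (forall x, dpt (g1 x) = sc k (dpt x)) ->
  (forall x, dpt (g2 x) = sc k (dpt x)) ->
  bottleneck t1 t2 = k%:E * bottleneck s1 s2.
Proof.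
move=> [h1 h1K h1K'] [h2 h2K h2K'] e1 e2.
have supS pi pi' : (forall y, pi' (g1 y) = g2 (pi y)) ->
    ereal_sup [set linf (dpt x) (dpt (pi' x)) | x in [set: _]] =
    k%:E * ereal_sup [set linf (dpt y) (dpt (pi y)) | y in [set: _]].
  move=> hp; rewrite -ereal_sup_pZl //; congr ereal_sup.
  apply/seteqP; split => z /=.
    move=> [x _ <-]; exists (linf (dpt (h1 x)) (dpt (pi (h1 x)))).
      by exists (h1 x).
    by rewrite -linfS -e1 -e2 -hp h1K'.
  by move=> [w [y _ <-] <-]; exists (g1 y) => //; rewrite hp e1 e2 linfS.
rewrite /bottleneck -ereal_inf_pZl //; congr ereal_inf.
apply/seteqP; split => z /=.
  move=> [pi' bpi' <-].
  exists (ereal_sup [set linf (dpt y) (dpt ((h2 \o pi' \o g1) y)) | y in [set: _]]).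
    exists (h2 \o pi' \o g1) => //.
    apply: bij_comp; last by exists h1.
    by apply: bij_comp => //; exists g2.
  by rewrite (supS (h2 \o pi' \o g1)) // => y /=; rewrite h2K'.
move=> [w [pi bpi <-] <-].
exists (g2 \o pi \o h1).
  apply: bij_comp; last by exists g1.
  by apply: bij_comp => //; exists h2.
by rewrite (supS pi) // => y /=; rewrite h1K.
Qed.

Lemma perm_bij (s t : seq (R * \bar R)) : perm_eq t (map (sc k) s) ->
  exists g : 'I_(size s) + R -> 'I_(size t) + R,
    bijective g /\ forall x, dpt (g x) = sc k (dpt x).
Proof.
move=> pt.
have /(perm_iotaP (0%R, 0%E)) [Is pIs eIs] : perm_eq (map (sc k) s) t.
  by rewrite perm_sym.
have sz : size s = size t by rewrite (perm_size pt) size_map.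
have sIs : size Is = size s by rewrite -(size_map (nth (0%R, 0%E) t)) -eIs size_map.
have lt i : (i < size s)%N -> (nth 0%N Is i < size t)%N.
  move=> hi; have : nth 0%N Is i \in Is by apply: mem_nth; rewrite sIs.
  by rewrite (perm_mem pIs) mem_iota.
pose sg (i : 'I_(size s)) : 'I_(size t) := Ordinal (lt i (ltn_ord i)).
have uIs : uniq Is by rewrite (perm_uniq pIs) iota_uniq.
have sgI : injective sg.
  move=> i j /(congr1 val) /= /eqP; rewrite nth_uniq ?sIs //.
  by move/eqP/val_inj.
have [sgi sgK sgK'] : bijective sg by apply: inj_card_bij => //; rewrite !card_ord sz.
have nthE (i : 'I_(size s)) : nth (0%R, 0%E) t (sg i) = sc k (nth (0%R, 0%E) s i).
  have := congr1 (fun l => nth (0%R, 0%E) l i) eIs.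
  rewrite (nth_map (0%R, 0%E)) // (nth_map 0%N) ?sIs // => <- //.
pose g (x : 'I_(size s) + R) : 'I_(size t) + R :=
  match x with inl i => inl (sg i) | inr a => inr (k * a)%R end.
pose gi (x : 'I_(size t) + R) : 'I_(size s) + R :=
  match x with inl i => inl (sgi i) | inr a => inr (k^-1 * a)%R end.
exists g; split.
  exists gi => -[i|a] /=; rewrite ?sgK ?sgK' // mulrA ?mulVf ?mulfV ?gt_eqF // mul1r //.
by move=> [i|a] //=; rewrite nthE.
Qed.

Lemma bottleneckS (s1 s2 t1 t2 : seq (R * \bar R)) :
  perm_eq t1 (map (sc k) s1) -> perm_eq t2 (map (sc k) s2) ->
  bottleneck t1 t2 = k%:E * bottleneck s1 s2.
Proof.
move=> /perm_bij [g1 [b1 e1]] /perm_bij [g2 [b2 e2]].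
exact: (bottleneck_transport b1 b2 e1 e2).
Qed.

End Bottle.


Section Main.
Variables (R : realType) (p : nat) (T : finType) (F : fieldType)
  (dims : seq nat) (m : posmode) (G : sgraph R p T)
  (Rm : 'M[R]_p) (A : 'cV[R]_p) (k : R).
Hypothesis hR : Rm^T *m Rm = 1%:M.
Hypothesis k0 : 0 < k.

Let G' := psi Rm A k G.

Lemma affine_len (a b : 'cV[R]_p) :
  enorm ((k *: (Rm *m a) + A) - (k *: (Rm *m b) + A)) = k * enorm (a - b).
Proof.
rewrite opprD addrACA subrr addr0 -scalerBr -mulmxBr enormZ ?ltW //.
by rewrite enormO.
Qed.

Lemma elen_psi u v : elen G' u v = k * elen G u v.
Proof. exact: affine_len. Qed.

Lemma subadjS theta : subadj G' (k * theta) =2 subadj G theta.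
Proof. by move=> u v; rewrite /subadj elen_psi ler_pM2l. Qed.

Lemma hnodeS theta u : hnode G' (k * theta) u = hnode G theta u.
Proof. by apply/setP => v; rewrite !inE (eq_connect (subadjS theta)). Qed.

Lemma coarseVS theta : coarseV G' (k * theta) = coarseV G theta.
Proof. by rewrite /coarseV (eq_imset _ (hnodeS theta)). Qed.

Lemma coarseES theta : coarseE G' (k * theta) = coarseE G theta.
Proof. by rewrite /coarseE coarseVS. Qed.

Lemma coarseV_mem theta S : S \in coarseV G theta -> exists u, u \in S.
Proof.
by case/imsetP => u _ ->; exists u; rewrite inE connect0.
Qed.

Lemma coarseXS theta S : S \in coarseV G theta ->
  coarseX G' m S = k *: (Rm *m coarseX G m S) + A.
Proof.
move=> /coarseV_mem [u hu]; case: m => /=.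
  rewrite big_split /= sumr_const -scaler_sumr -mulmx_sumr scalerDr.
  rewrite -scaler_nat (scalerA _ _ A) mulVf ?pnatr_eq0 -?lt0n; last by apply/card_gt0P; exists u.
  by rewrite scale1r -scalemxAr !scalerA mulrC.
by case: pickP => [u0 _ //|/(_ u)]; rewrite hu.
Qed.

Lemma coarse_adj theta Vi Vj : adj (coarsen m theta G) Vi Vj ->
  Vi \in coarseV G theta /\ Vj \in coarseV G theta.
Proof.
rewrite /adj /= => /imset2P [X Y hX]; rewrite inE => /andP [hY _] e.
have hi : Vi \in [set X; Y]%SET by rewrite -e set21.
have hj : Vj \in [set X; Y]%SET by rewrite -e set22.
by move: hi hj; rewrite !inE => /orP [] /eqP -> /orP [] /eqP ->.
Qed.

Local Open Scope ereal_scope.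

Lemma dBS theta : dB F dims G' (coarsen m (k * theta) G') =
  k%:E * dB F dims G (coarsen m theta G).
Proof.
rewrite /dB (big_morph (fun x => k%:E * x) (id1 := 0) (op1 := maxe)).
- apply: eq_bigr => q _; apply: (bottleneckS k0).
    by apply: (PDqS k0) => // u v _; exact: elen_psi.
  apply: (PDqS k0) => //=; first exact: coarseVS.
    exact: coarseES.
  move=> Vi Vj /coarse_adj [hi hj].
  by rewrite /elen /= !(coarseXS (theta := theta)) // affine_len.
- by move=> x y; rewrite maxe_pMr // lee_fin ltW.
- by rewrite mule0.
Qed.

Lemma dBsupS : dBsup F dims m G' = k%:E * dBsup F dims m G.
Proof.
rewrite /dBsup -ereal_sup_pZl //; congr ereal_sup.
apply/seteqP; split => z /=.
  move=> [t ht <-]; exists (dB F dims G (coarsen m (t / k)%R G)).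
    by exists (t / k)%R => //=; rewrite divr_ge0 // ltW.
  by rewrite -dBS mulrC divfK ?gt_eqF.
move=> [w [t ht <-] <-]; exists (k * t)%R; last by rewrite dBS.
by rewrite /= mulr_ge0 // ltW.
Qed.

Lemma fine_kM (x : \bar R) : fine (k%:E * x) = (k * fine x)%R.
Proof.
case: x => [x| |] //=; rewrite ?gt0_muley ?gt0_muleNy ?lte_fin //= mulr0 //.
Qed.

Lemma scoreS theta : score F dims m G' (k * theta) = score F dims m G theta.
Proof.
rewrite /score coarseES dBsupS dBS fine_kM; congr (_ + _).
by rewrite muleA -EFinM invfM mulrAC mulVf ?gt_eqF // mul1r.
Qed.

End Main.

Unset Implicit Arguments.
Set Strict Implicit.
Set Printing Implicit Defensive.

Theorem proposition3 (R : realType) (p : nat) (T : finType) (F : fieldType)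
  (dims : seq nat) (m : posmode) (G : sgraph R p T)
  (Rm : 'M[R]_p) (A : 'cV[R]_p) (k : R) :
  wf_sgraph G -> sE G != finset.set0 ->
  Rm^T *m Rm = 1%:M -> 0 < k ->
  (0 < dBsup F dims m G)%E -> (dBsup F dims m G < +oo)%E ->
  (exists2 theta0 : R, 0 <= theta0 &
     dB F dims G (coarsen m theta0 G) = dBsup F dims m G) ->
  let G' := psi Rm A k G in
  [/\ (forall theta : R, 0 <= theta ->
         score F dims m G' (k * theta) = score F dims m G theta),
      argmin_score F dims m G' = (fun theta => k * theta) @` argmin_score F dims m G
    & forall thetas : R, argmin_score F dims m G thetas ->
        argmin_score F dims m G' (k * thetas) /\
        sg_eq (coarsen m (k * thetas) G') (psi Rm A k (coarsen m thetas G))].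
Proof.
move=> _ _ hR k0 _ _ _ G'.
have sS theta : score F dims m G' (k * theta) = score F dims m G theta.
  exact: scoreS.
have kK b : k * (b / k) = b by rewrite mulrC divfK ?gt_eqF.
have arg : argmin_score F dims m G' =
    (fun theta => k * theta) @` argmin_score F dims m G.
  apply/seteqP; split => b /=.
    move=> [hb hmin]; exists (b / k); last exact: kK.
    split; first by rewrite divr_ge0 // ltW.
    move=> t ht; rewrite -!sS kK; apply: hmin.
    by rewrite mulr_ge0 // ltW.
  move=> [t [ht hmin] <-]; split; first by rewrite mulr_ge0 // ltW.
  move=> b' hb'; rewrite -(kK b') !sS; apply: hmin.
  by rewrite divr_ge0 // ltW.
split.
- by move=> t _; exact: sS.
- exact: arg.
move=> t ht; split.
  by rewrite arg; exists t.
split.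
- by apply: coarseVS.
- by apply: coarseES.
- move=> S hS.
  rewrite [sV _]/= coarseVS // in hS.
  by rewrite /= (coarseXS m Rm A k hS).
Qed.
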